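(* Let $D$ be a lower bounded distributive lattice. Then $M(D_\infty)\cong M(D)\oplus\mathbb{Z}$, where the splitting is induced by the natural homomorphisms $D\to D_\infty\to\mathbf{2}$ and $\mathbf{2}\to D_\infty$.
   Context: For a lower bounded distributive lattice $D$, $D_\infty$ is the bounded distributive lattice obtained by adjoining a new top element $\infty$. $\mathbf{2}=\{0\le 1\}$; the map $D_\infty\to\mathbf{2}$ sends every element other than $\infty$ to $0$ and $\infty$ to $1$, and $\mathbf{2}\to D_\infty$ sends $0\mapsto 0$, $1\mapsto\infty$. The module of motives $M(D)$ is $\mathbb{Z}[D]$ modulo $[0]=0$ and $[U]+[V]=[U\vee V]+[U\wedge V]$, functorial in lattice homomorphisms preserving $0$. *)

(* Defs.v *)
From HB Require Import structures.
From mathcomp Require Import all_boot all_order all_algebra.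
From mathcomp.multinomials Require Export freeg.
Set Implicit Arguments. Unset Strict Implicit. Unset Printing Implicit Defensive.
Import Order.TTheory GRing.Theory.
Local Open Scope ring_scope.

Notation FZ T := {freeg T / int}.

(* Generators of the subgroup of relations defining the module of motives of a
   lattice presented by its bottom [z], join [j] and meet [m]:
   [0] = 0 and [U] + [V] = [U \/ V] + [U /\ V]. *)
Inductive motrel (T : choiceType) (z : T) (j m : T -> T -> T) : FZ T -> Prop :=
| motrel0 : motrel z j m 0
| motrel_bot : motrel z j m << z >>
| motrel_mod (U V : T) :
    motrel z j m (<< U >> + << V >> - << j U V >> - << m U V >>)
| motrel_add x y : motrel z j m x -> motrel z j m y -> motrel z j m (x + y)
| motrel_opp x : motrel z j m x -> motrel z j m (- x).

(* M(T) = Z[T] / motrel; we work with representatives: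
   x = y in M(T)  iff  motrel (x - y). *)

Definition fgmapT (T T' : choiceType) (g : T -> T') (x : FZ T) : FZ T' :=
  fglift (fun t => << g t >> : FZ T') x.

Definition motD d (D : bDistrLatticeType d) : FZ D -> Prop :=
  motrel (\bot%O : D) (fun u v => (u `|` v)%O) (fun u v => (u `&` v)%O).

(* D_oo = option D, with None the new top element oo. *)
Definition join_oo d (D : bDistrLatticeType d) (u v : option D) : option D :=
  match u, v with
  | Some a, Some b => Some (a `|` b)%O
  | _, _ => None
  end.
Definition meet_oo d (D : bDistrLatticeType d) (u v : option D) : option D :=
  match u, v with
  | Some a, Some b => Some (a `&` b)%O
  | None, w => w
  | w, None => w
  end.
Definition motDoo d (D : bDistrLatticeType d) : FZ (option D) -> Prop :=
  motrel (Some (\bot%O : D)) (@join_oo d D) (@meet_oo d D).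

(* The lattice 2 = {0 <= 1} = bool (false <= true). *)
Definition mot2 : FZ bool -> Prop := motrel false orb andb.

Definition to2 (D : Type) (u : option D) : bool :=
  if u is None then true else false.
Definition from2 d (D : bDistrLatticeType d) (b : bool) : option D :=
  if b then None else Some \bot%O.

(* Main.v *)
Require Import Defs.
From HB Require Import structures.
From mathcomp Require Import all_boot all_order all_algebra.
From mathcomp.multinomials Require Import freeg.
Import Order.TTheory GRing.Theory.
Local Open Scope ring_scope.

Section Add.
Variables (T T' : choiceType) (f : T -> FZ T').
HB.instance Definition _ := GRing.isAdditive.Build (FZ T) (FZ T') (fglift f) (@lift_is_additive int T (FZ T') f).
End Add.

Lemma freegZ (T : choiceType) (k : int) (t : T) : k *: (<< t >> : FZ T) = << k *g t >>.
Proof. by apply/eqP/freeg_eqP => y; rewrite coeffZ !coeffU mul1r. Qed.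

Lemma fgliftU (T T' : choiceType) (f : T -> FZ T') k t : fglift f << k *g t >> = k *: f t.
Proof. by rewrite liftU. Qed.

Lemma fgmapTU (T T' : choiceType) (g : T -> T') k t : fgmapT g << k *g t >> = << k *g g t >>.
Proof. by rewrite /fgmapT liftU freegZ. Qed.

Lemma fgmapTD (T T' : choiceType) (g : T -> T') : {morph fgmapT g : x y / x + y}.
Proof. by move=> x y; rewrite /fgmapT raddfD. Qed.
Lemma fgmapTB (T T' : choiceType) (g : T -> T') : {morph fgmapT g : x y / x - y}.
Proof. by move=> x y; rewrite /fgmapT raddfB. Qed.
Lemma fgmapT0 (T T' : choiceType) (g : T -> T') : fgmapT g 0 = 0.
Proof. by rewrite /fgmapT raddf0. Qed.

Section Rel.
Variables (T : choiceType) (z : T) (j m : T -> T -> T).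
Local Notation R := (motrel z j m).

Lemma mr_sub x y : R x -> R y -> R (x - y).
Proof. by move=> hx hy; apply: motrel_add => //; apply: motrel_opp. Qed.

Lemma mr_muln x n : R x -> R (x *+ n).
Proof. move=> hx; elim: n => [|n IH]; first by rewrite mulr0n; apply: motrel0.
by rewrite mulrS; apply: motrel_add. Qed.

Lemma mr_scale x (k : int) : R x -> R (k *: x).
Proof. move=> hx; rewrite -[k]intz scaler_int; case: k => n.
  exact: mr_muln.
by rewrite NegzE mulrNz; apply/motrel_opp/mr_muln. Qed.

Lemma mr_U t k : R << t >> -> R << k *g t >>.
Proof. by move=> h; rewrite -freegZ; apply: mr_scale. Qed.

Variables (T' : choiceType) (z' : T') (j' m' : T' -> T' -> T').
Local Notation R' := (motrel z' j' m').

Lemma fglift_pres (f : T -> FZ T') : R' (f z) ->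
  (forall U V, R' (f U + f V - f (j U V) - f (m U V))) ->
  forall x, R x -> R' (fglift f x).
Proof.
move=> hz hm x; elim => [|||x1 x2 _ h1 _ h2|x1 _ h1].
- by rewrite raddf0; apply: motrel0.
- by rewrite fgliftU scale1r.
- move=> U V; rewrite !raddfB raddfD.
  by rewrite /= !fgliftU !scale1r.
- by rewrite raddfD; apply: motrel_add.
- by rewrite raddfN; apply: motrel_opp.
Qed.

Lemma fgmapT_pres (g : T -> T') : g z = z' ->
  (forall U V, g (j U V) = j' (g U) (g V)) ->
  (forall U V, g (m U V) = m' (g U) (g V)) ->
  forall x, R x -> R' (fgmapT g x).
Proof.
move=> hz hj hm; apply: fglift_pres; first by rewrite hz; apply: motrel_bot.
by move=> U V; rewrite hj hm; apply: motrel_mod.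
Qed.
End Rel.
Lemma bool_dec2 (x : FZ bool) : x = << coeff false x *g false >> + << coeff true x *g true >>.
Proof. by apply/eqP/freeg_eqP => -[]; rewrite coeffD !coeffU /= ?mulr0 ?mulr1 ?addr0 ?add0r. Qed.

Lemma subDD1 (V : zmodType) (a b c e : V) : a + b - (a + c + e) = b - (c + e).
Proof. by rewrite -(addrA a c e) opprD addrACA subrr add0r. Qed.
Lemma subDD2 (V : zmodType) (a b c e : V) : a + b - (c + (a + e)) = b - (c + e).
Proof. by rewrite addrCA addrA subDD1. Qed.

Lemma subDD3 (V : zmodType) (P Q b : V) : b = P + Q - P - (Q - b).
Proof. by rewrite [P + Q]addrC addrK opprB addrC subrK. Qed.

Definition rD d (D : bDistrLatticeType d) : FZ (option D) -> FZ D :=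
  fglift (fun u : option D => if u is Some t then << t >> else 0).

Theorem lemma3p36 (d : Order.disp_t) (D : bDistrLatticeType d) :
  let i := @fgmapT D (option D) Some in
  let p := @fgmapT (option D) bool (@to2 D) in
  let s := @fgmapT bool (option D) (@from2 d D) in
  (* the induced maps are well defined on modules of motives *)
  (forall x, motD x -> motDoo (i x)) /\
  (forall x, motDoo x -> mot2 (p x)) /\
  (forall x, mot2 x -> motDoo (s x)) /\
  (* M(2) is isomorphic to Z *)
  (exists theta : {additive FZ bool -> int},
      (forall x, theta x = 0 <-> mot2 x) /\ (forall n : int, exists x, theta x = n)) /\
  (* p o i = 0 and p o s = id on motives *)
  (forall x, mot2 (p (i x))) /\
  (forall x, mot2 (p (s x) - x)) /\
  (* M(D) (+) M(2) -> M(D_oo), (a, b) |-> i a + s b, is surjective ... *)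
  (forall x : FZ (option D), exists a b, motDoo (x - (i a + s b))) /\
  (* ... and injective *)
  (forall a b, motDoo (i a + s b) -> motD a /\ mot2 b).
Proof.
cbv zeta; rewrite /motD /motDoo /mot2.
have H1 : forall x : FZ D, @motD d D x -> @motDoo d D (fgmapT Some x).
  by apply: fgmapT_pres.
have H2 : forall x : FZ (option D), @motDoo d D x -> mot2 (fgmapT (@to2 D) x).
  apply: fgmapT_pres => //.
    by move=> [u|] [v|].
  by move=> [u|] [v|].
have H3 : forall x : FZ bool, mot2 x -> @motDoo d D (fgmapT (@from2 d D) x).
  apply: fgmapT_pres => //.
    by move=> [] [] //=; rewrite joinxx.
  by move=> [] [] //=; rewrite meetxx.
have H5 : forall x : FZ D, mot2 (fgmapT (@to2 D) (fgmapT Some x)).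
  elim/freeg_ind_dom0 => [|k t x _ _ IH]; first by rewrite !fgmapT0; apply: motrel0.
  rewrite !fgmapTD !fgmapTU /=; apply: motrel_add => //.
  by apply: mr_U; apply: motrel_bot.
have H6 : forall x : FZ bool, mot2 (fgmapT (@to2 D) (fgmapT (@from2 d D) x) - x).
  elim/freeg_ind_dom0 => [|k t x _ _ IH]; first by rewrite !fgmapT0 subr0; apply: motrel0.
  rewrite !fgmapTD !fgmapTU /=.
  have -> : to2 (from2 D t) = t by case: t.
  by rewrite opprD addrACA subrr add0r.
split => //; split => //; split => //.
split.
  exists (coeff true); split; last first.
    by move=> n; exists << n *g true >>; rewrite /= coeffU mulr1.
  move=> x /=; split => [h|].
    rewrite (bool_dec2 x) h freegU0 addr0.
    by apply: mr_U; apply: motrel_bot.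
  elim => [|||x1 x2 _ h1 _ h2|x1 _ h1] //=.
  - by rewrite coeff0.
  - by rewrite coeffU mulr0.
  - move=> [] [] /=; rewrite !coeffB !coeffD !coeffU /= ?mulr0 ?mulr1 ?subr0 ?addr0 ?add0r ?subrr //.
  - by rewrite coeffD h1 h2 addr0.
  - by rewrite coeffN h1 oppr0.
split => //; split => //; split.
  elim/freeg_ind_dom0 => [|k t x _ _ [a [b IH]]].
    by exists 0, 0; rewrite !fgmapT0 addr0 subr0; apply: motrel0.
  case: t => [t|].
    exists (<< k *g t >> + a), b.
    by rewrite fgmapTD fgmapTU subDD1.
  exists a, (<< k *g true >> + b).
  by rewrite fgmapTD fgmapTU /= subDD2.
move=> a b h.
have hb : mot2 b.
  have e : b = (fgmapT (@to2 D) (fgmapT Some a + fgmapT (from2 D) b))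
     - fgmapT (@to2 D) (fgmapT Some a)
     - (fgmapT (@to2 D) (fgmapT (from2 D) b) - b).
    by rewrite fgmapTD; apply: subDD3.
  rewrite {1}e; apply: mr_sub; last exact: H6.
  by apply: mr_sub; [exact: H2|exact: H5].
split => //.
have ha : motDoo (fgmapT Some a).
  have -> : fgmapT Some a = (fgmapT Some a + fgmapT (from2 D) b) - fgmapT (from2 D) b by rewrite addrK.
  by apply: mr_sub => //; exact: H3.
have ea : @rD d D (fgmapT Some a) = a.
  elim/freeg_ind_dom0: a {h ha} => [|k t x _ _ IH]; first by rewrite fgmapT0 /rD raddf0.
  rewrite fgmapTD /rD raddfD /=; move: IH; rewrite /rD => ->.
  by rewrite fgmapTU fgliftU freegZ.
rewrite -ea.
apply: (@fglift_pres _ _ _ _ _ _ _ _ _ _ _ _ ha) => /=.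
  by rewrite -[<< _ >>]freegZ scale1r; apply: motrel_bot.
move=> [u|] [v|] /=.
- exact: motrel_mod.
- by rewrite addr0 subr0 subrr; apply: motrel0.
- by rewrite add0r subr0 subrr; apply: motrel0.
- by rewrite !addr0 !subr0; apply: motrel0.
Qed.
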